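(* Let $d,N\in\mathbb{N}$, $\gamma_1,\dots,\gamma_N\in\mathbb{R}$, let $(\Omega,\mathcal{F},\mathbb{P})$ be a probability space, let $X_n\colon\Omega\to\mathbb{R}^d$, $n\in\{1,\dots,N\}$, be independent random variables, let $m\in\{1,\dots,N\}$ satisfy $\gamma_m\neq0$, and assume that $X_m$ is non-degenerate. Then $\sum_{n=1}^N\gamma_nX_n$ is non-degenerate.
   Context: For a Borel measure $\mu$ on $\mathbb{R}^d$, $\operatorname{supp}(\mu)=\{x\in\mathbb{R}^d\colon\mu(A)>0\text{ for every open }A\ni x\}$. For a random variable $X$, $\operatorname{supp}(X)=\operatorname{supp}(\mathbb{P}_X)$ where $\mathbb{P}_X$ is the law of $X$. $X$ is called non-degenerate if the interior of $\operatorname{supp}(X)$ is non-empty. *)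

(* Defs.v *)
From HB Require Import structures.
From mathcomp Require Import all_boot all_order all_algebra.
From mathcomp Require Import all_classical all_reals all_analysis.
Set Implicit Arguments. Unset Strict Implicit. Unset Printing Implicit Defensive.
Import Order.TTheory GRing.Theory Num.Theory.
Import numFieldNormedType.Exports.
Local Open Scope classical_set_scope.
Local Open Scope ring_scope.

Definition borel_rV (R : realType) (d : nat) : set (set 'rV[R]_d) :=
  <<s [set A : set 'rV[R]_d | open A] >>.

Definition rv_rV (dT : measure_display) (T : measurableType dT) (R : realType)
  (d : nat) (X : T -> 'rV[R]_d) : Prop :=
  forall B, borel_rV B -> measurable (X @^-1` B).

Definition independent_rV (dT : measure_display) (T : measurableType dT)
  (R : realType) (P : probability T R) (d N : nat)
  (X : 'I_N -> T -> 'rV[R]_d) : Prop :=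
  forall (S : {set 'I_N}) (B : 'I_N -> set 'rV[R]_d),
    (forall i, borel_rV (B i)) ->
    P (\bigcap_(i in [set i | i \in S]) (X i @^-1` B i)) =
      (\prod_(i in S) P (X i @^-1` B i))%E.

Definition supp_rV (dT : measure_display) (T : measurableType dT)
  (R : realType) (P : probability T R) (d : nat) (X : T -> 'rV[R]_d)
  : set 'rV[R]_d :=
  [set x | forall A : set 'rV[R]_d, open A -> A x -> (0 < P (X @^-1` A))%E].

Definition nondegenerate_rV (dT : measure_display) (T : measurableType dT)
  (R : realType) (P : probability T R) (d : nat) (X : T -> 'rV[R]_d) : Prop :=
  (supp_rV P X)° !=set0.

(* Main.v *)
Require Import Defs.
From HB Require Import structures.
From mathcomp Require Import all_boot all_order all_algebra.
From mathcomp Require Import all_classical all_reals all_analysis.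
From mathcomp Require Import ring lra.
Import Order.TTheory GRing.Theory Num.Theory.
Import numFieldNormedType.Exports.
Local Open Scope classical_set_scope.
Local Open Scope ring_scope.
Definition rr {R : realType} {d} (q : 'rV[rat]_d) : 'rV[R]_d := map_mx ratr q.
Lemma ratball (R : realType) d (A : set 'rV[R]_d) (x : 'rV[R]_d) :
  open A -> A x -> exists qr : 'rV[rat]_d * rat,
  [/\ 0 < qr.2, ball (rr qr.1 : 'rV[R]_d) (ratr qr.2) x &
      ball (rr qr.1 : 'rV[R]_d) (ratr qr.2) `<=` A].
Proof.
move=> oA Ax; have /nbhs_ballP[e /= e0 sA] := oA x Ax.
have /rat_in_itvoo[r] : 0 < e / 2 by rewrite divr_gt0.
rewrite in_itv /= => /andP[r0 re].
have : forall j : 'I_d, exists q : rat,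
    ratr q \in `](x ord0 j - ratr r), (x ord0 j + ratr r)[.
  move=> j; apply: rat_in_itvoo; rewrite ltrBlDr -addrA ltrDl.
  by rewrite addr_gt0.
case/fin_all_exists => qf qfP.
have bq : ball (rr (\row_j qf j) : 'rV[R]_d) (ratr r) x.
  split => // i j; rewrite (ord1 i) !mxE.
  move: (qfP j); rewrite in_itv /= => /andP[h1 h2].
  by rewrite /ball /= ltr_distlC; apply/andP; split; change (0 : 'I_1) with (@ord0 0); lra.
exists (\row_j qf j, r); split => //=.
  by rewrite -(ltr0q R).
move=> y hy; apply: sA; apply: (@le_ball _ _ _ (ratr r + ratr r)); first by lra.
apply: ball_triangle hy; exact: ball_sym.
Qed.

Arguments ratball {R d A x}.

Lemma rv_of_balls (dT : measure_display) (T : measurableType dT) (R : realType) d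
  (f : T -> 'rV[R]_d) :
  (forall (q : 'rV[rat]_d) (r : rat), measurable (f @^-1` ball (rr q : 'rV[R]_d) (ratr r))) ->
  rv_rV f.
Proof.
move=> hb B; rewrite /borel_rV.
suff: <<s [set A : set 'rV[R]_d | open A] >> `<=` [set B | measurable (f @^-1` B)] by apply.
apply: smallest_sub.
  split => /=.
  - by rewrite preimage_set0.
  - by move=> A mA; rewrite setTD preimage_setC; exact: measurableC.
  - by move=> F mF; rewrite preimage_bigcup; exact: bigcupT_measurable.
move=> A /= oA.
pose F k := if @unpickle ('rV[rat]_d * rat)%type k is Some qr then
  (if `[< 0 < qr.2 /\ ball (rr qr.1 : 'rV[R]_d) (ratr qr.2) `<=` A >] then
     f @^-1` ball (rr qr.1 : 'rV[R]_d) (ratr qr.2) else set0) else set0.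
have -> : f @^-1` A = \bigcup_k F k.
  apply/seteqP; split.
    move=> w /= Afw; have [qr [h1 h2 h3]] := ratball oA Afw.
    exists (pickle qr) => //; rewrite /F pickleK.
    by case: asboolP => // H; case: H; split.
  move=> w [k _]; rewrite /F; case: unpickle => // qr.
  by case: asboolP => // H hw; exact: (proj2 H _ hw).
apply: bigcupT_measurable => k; rewrite /F; case: unpickle => // qr.
by case: asboolP => _; [exact: hb | exact: measurable0].
Qed.

Lemma open_coord (R : realType) d (i : 'I_1) (j : 'I_d) (a b : R) :
  open [set v : 'rV[R]_d | v i j \in `]a, b[].
Proof.
rewrite openE => v /=; rewrite in_itv /= => /andP[av vb].
rewrite /interior /=; apply/nbhs_ballP.
exists (Num.min (v i j - a) (b - v i j)) => /=.
  by rewrite lt_min !subr_gt0 av vb.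
move=> y [_ /(_ i j)]; rewrite /ball /= lt_min => /andP[h1 h2].
rewrite in_itv /=; apply/andP; split.
  move: h1; rewrite ltr_norml => /andP[_]; lra.
move: h2; rewrite ltr_norml => /andP[h _]; lra.
Qed.

Lemma coord_meas (dT : measure_display) (T : measurableType dT) (R : realType) d
  (X : T -> 'rV[R]_d) (i : 'I_1) (j : 'I_d) :
  rv_rV X -> measurable_fun setT (fun w => X w i j).
Proof.
move=> hX; apply: (measurability _ (measurable_realfun.RGenOpens.measurableE R)).
move=> _ [_ [a [b ->]] <-]; rewrite setTI.
apply: (hX [set v : 'rV[R]_d | v i j \in `]a, b[]).
apply: sub_sigma_algebra; exact: open_coord.
Qed.

Lemma sum_rv (dT : measure_display) (T : measurableType dT) (R : realType) d N
  (gamma : 'I_N -> R) (X : 'I_N -> T -> 'rV[R]_d) :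
  (forall n, rv_rV (X n)) -> rv_rV (fun w => \sum_(n < N) gamma n *: X n w).
Proof.
move=> hX; apply: rv_of_balls => q r.
set c := (rr q : 'rV[R]_d); set e := (ratr r : R).
have [e0|e0] := ltP 0 e; last first.
  rewrite (_ : _ @^-1` _ = set0); first exact: measurable0.
  by apply/seteqP; split => w // [h]; move: e0; rewrite leNgt h.
have -> : (fun w => \sum_(n < N) gamma n *: X n w) @^-1` ball c e =
   \bigcap_(ij in [set: 'I_1 * 'I_d])
     ((fun w => \sum_(n < N) gamma n * X n w ij.1 ij.2) @^-1` ball (c ij.1 ij.2) e).
  have E w i j : (\sum_(n<N) gamma n *: X n w) i j = \sum_(n<N) gamma n * X n w i j.
    by rewrite summxE; apply: eq_bigr => k _; rewrite mxE.
  apply/seteqP; split => w /=.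
    by move=> [_ h] ij _; have := h ij.1 ij.2; rewrite E.
  by move=> h; split => // i j; have := h (i, j) I; rewrite E.
apply: fin_bigcap_measurable; first exact: finite_finset.
move=> [i j] _ /=.
have mf : measurable_fun setT (fun w => \sum_(n < N) gamma n * X n w i j).
  apply: measurable_sum => n; apply: measurable_realfun.measurable_funM; first exact: measurable_cst.
  exact: coord_meas.
rewrite -[X in measurable X]setTI; apply: mf => //; exact: measurable_realfun.measurable_ball.
Qed.

Lemma meas_open (dT : measure_display) (T : measurableType dT) (R : realType) d
  (X : T -> 'rV[R]_d) (A : set 'rV[R]_d) : rv_rV X -> open A -> measurable (X @^-1` A).
Proof. by move=> hX oA; apply: hX; exact: sub_sigma_algebra. Qed.

Lemma meas_ball (dT : measure_display) (T : measurableType dT) (R : realType) d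
  (X : T -> 'rV[R]_d) (c : 'rV[R]_d) (e : R) : rv_rV X -> measurable (X @^-1` ball c e).
Proof.
move=> hX; have [e0|e0] := ltP 0 e.
  by apply: meas_open => //; exact: ball_open.
rewrite (_ : _ @^-1` _ = set0); first exact: measurable0.
by apply/seteqP; split => w // [h]; move: e0; rewrite leNgt h.
Qed.

Lemma supp_nonempty (dT : measure_display) (T : measurableType dT) (R : realType)
  (P : probability T R) d (X : T -> 'rV[R]_d) :
  rv_rV X -> exists y, supp_rV P X y.
Proof.
move=> hX; apply: contrapT => /forallNP H.
pose F k := if @unpickle ('rV[rat]_d * rat)%type k is Some qr then
  (if `[< P (X @^-1` ball (rr qr.1 : 'rV[R]_d) (ratr qr.2)) = 0%E >] then
     X @^-1` ball (rr qr.1 : 'rV[R]_d) (ratr qr.2) else set0) else set0.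
have mF k : measurable (F k).
  rewrite /F; case: unpickle => // qr; case: asboolP => _ //.
  exact: meas_ball.
have sub : [set: T] `<=` \bigcup_k F k.
  move=> w _; have /existsNP[A /not_implyP[oA /not_implyP[Ay nP]]] := H (X w).
  have [qr [h1 h2 h3]] := ratball oA Ay.
  exists (pickle qr) => //; rewrite /F pickleK.
  case: asboolP => [_|]; first exact: h2.
  move=> nP0; exfalso; apply: nP0; apply/eqP; rewrite eq_le measure_ge0 andbT.
  apply: (@le_trans _ _ (P (X @^-1` A))).
    apply: le_measure.
    - by rewrite inE; exact: meas_ball.
    - by rewrite inE; exact: meas_open.
    - by move=> t; exact: h3.
  by rewrite leNgt; apply/negP.
have hle := measure_sigma_subadditive P mF measurableT sub.
have h1 : (1 <= \big[+%E/0%R]_(0 <= n <oo) P (F n))%E.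
  apply: (@le_trans _ _ (P setT)); last exact: hle.
  by rewrite probability_setT.
move: h1; rewrite eseries0; first by rewrite lee_fin ler10.
move=> k _ _; rewrite /F; case: unpickle => [qr|]; last exact: measure0.
by case: asboolP => // ->.
Qed.

Lemma supp_sum (dT : measure_display) (T : measurableType dT) (R : realType)
  (P : probability T R) d N (gamma : 'I_N -> R) (X : 'I_N -> T -> 'rV[R]_d)
  (w : 'I_N -> 'rV[R]_d) :
  (forall n, rv_rV (X n)) -> independent_rV P X ->
  (forall n, supp_rV P (X n) (w n)) ->
  supp_rV P (fun t => \sum_(n < N) gamma n *: X n t) (\sum_(n < N) gamma n *: w n).
Proof.
move=> hX hind hw A oA Ax.
have /nbhs_ballP[e /= e0 sA] := oA _ Ax.
pose K := \sum_(n < N) `|gamma n|.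
have K0 : 0 <= K by apply: sumr_ge0 => n _.
pose dl := e / (1 + K).
have dl0 : 0 < dl by rewrite divr_gt0 // ltr_pwDl.
pose E := \bigcap_(i in [set i | i \in [set: 'I_N]%SET]) (X i @^-1` ball (w i) dl).
have hE := hind [set: 'I_N]%SET (fun i => ball (w i) dl).
have mE : measurable E.
  apply: fin_bigcap_measurable; first exact: finite_finset.
  move=> i _; exact: meas_ball.
have PE : (0 < P E)%E.
  rewrite /E hE; last by move=> i; apply: sub_sigma_algebra; exact: ball_open.
  apply: (big_ind (fun x => 0 < x)%E) => //.
    by move=> x y x0 y0; exact: mule_gt0.
  move=> i _; apply: hw; [exact: ball_open | exact: ballxx].
apply: (lt_le_trans PE); apply: le_measure.
- by rewrite inE.
- by rewrite inE; apply: meas_open => //; exact: sum_rv.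
move=> t Et; apply: sA.
have ht i : `|w i - X i t| < dl.
  by have := Et i (finset.in_setT i); rewrite -ball_normE /ball_.
rewrite -ball_normE /ball_ /= -sumrB.
apply: (le_lt_trans (ler_norm_sum _ _ _)).
apply: (@le_lt_trans _ _ (\sum_(n < N) `|gamma n| * dl)).
  apply: ler_sum => n _; rewrite -scalerBr normrZ.
  by apply: ler_wpM2l => //; exact: ltW.
rewrite -mulr_suml -/K /dl mulrA ltr_pdivrMr; last by rewrite ltr_pwDl.
lra.
Qed.

Theorem corollary6p12 (R : realType) (d N : nat) (gamma : 'I_N -> R)
  (dT : measure_display) (T : measurableType dT) (P : probability T R)
  (X : 'I_N -> T -> 'rV[R]_d) :
  (forall n, rv_rV (X n)) ->
  independent_rV P X ->
  forall m : 'I_N, gamma m != 0 ->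
  nondegenerate_rV P (X m) ->
  nondegenerate_rV P (fun w => \sum_(n < N) gamma n *: X n w).
Proof.
move=> hX hind m gm [z0 hz0].
have /nbhs_ballP[r /= r0 hr] := hz0.
have [y hy] : exists y : 'I_N -> 'rV[R]_d, forall n, supp_rV P (X n) (y n).
  exact: (fin_all_exists (fun n => @supp_nonempty _ _ _ P _ _ (hX n))).
pose wz (z : 'rV[R]_d) n := if n == m then z else y n.
pose Sum z := \sum_(n < N) gamma n *: wz z n.
have SumE z : Sum z = Sum z0 + gamma m *: (z - z0).
  have Hs z' : \sum_(n < N | n != m) gamma n *: wz z' n =
               \sum_(n < N | n != m) gamma n *: y n.
    by apply: eq_bigr => n /negbTE; rewrite /wz => ->.
  rewrite /Sum (bigD1 m) //= [in RHS](bigD1 m) //= !Hs /wz eqxx scalerBr.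
  set s := \sum_(n < N | n != m) _.
  by rewrite [RHS]addrAC subrKC.
exists (Sum z0); rewrite /interior /=; apply/nbhs_ballP.
exists (`|gamma m| * r); first by rewrite /= mulr_gt0 // normr_gt0.
move=> x hx.
pose z := z0 + (gamma m)^-1 *: (x - Sum z0).
have Sz : Sum z = x.
  rewrite SumE /z [z0 + _]addrC addrK scalerA mulfV // scale1r.
  by rewrite addrC subrK.
rewrite -Sz; apply: supp_sum => // n; rewrite /wz.
case: eqP => [->|_]; last exact: hy.
apply: hr; move: hx; rewrite -!ball_normE /ball_ /= /z.
rewrite opprD addrA subrr add0r normrN normrZ normfV distrC => hx.
by rewrite mulrC ltr_pdivrMr ?normr_gt0 // mulrC.
Qed.
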